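(* Let $X$ be a compact subset of $K$, or more generally any compact Hausdorff totally disconnected topological space, and let $\{f_n\}_{n\ge0}$ be an orthonormal basis of $C(X,K)$. Then for every positive integer $m$: (1) $\{f_n^{q^m}\}_{n\ge0}$ is an orthonormal basis of $C(X,K)$; (2) $\{f_n^{1/q^m}\}_{n\ge0}$ is an orthonormal basis of $C(X,K_m)$.
   Context: Let $q$ be a prime power, $K=\mathbf{F}_q((T))$ with $T$-adic absolute value $|x|=q^{-v(x)}$. For an integer $m\ge1$, $K_m=K(T^{1/q^m})=\mathbf{F}_q((T^{1/q^m}))$ with the extended absolute value; every element of $K$ has a unique $q^m$-th root in $K_m$, and $f^{1/q^m}$ denotes the pointwise $q^m$-th root $x\mapsto f(x)^{1/q^m}$. For a field $L\in\{K,K_m\}$, $C(X,L)$ is the $L$-Banach space of continuous functions $X\to L$ with sup-norm; a sequence $(g_n)$ in it is an orthonormal basis if every $g$ can be written uniquely as $g=\sum a_ng_n$ with $a_n\in L$, $a_n\to0$, and then $\|g\|=\max|a_n|$. *)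

(* Defs.v *)
From HB Require Import structures.
From Stdlib Require Import ZArith Reals Lia ClassicalEpsilon.
From mathcomp Require Import all_boot all_order all_algebra.
From mathcomp Require Import all_classical all_reals all_analysis.

Set Implicit Arguments.
Unset Strict Implicit.
Unset Printing Implicit Defensive.

Import GRing.Theory.

(* Laurent series F((S)) over a finite field F = F_q, q = #|F|.        *)
(*  * K   = F_q((T))            is this type with S = T   (e = 1);      *)
(*  * K_m = F_q((T^{1/q^m}))    is this type with S = T^{1/q^m}         *)
(*                              (e = q^m), K embedded by T |-> S^{q^m}. *)
(* The absolute value with ramification e is |x| = q^{-v(x)/e}, where   *)
(* v(x) is the S-adic valuation; for e = 1 this is the T-adic absolute  *)
(* value of K and for e = q^m its unique extension to K_m.              *)

Section Laurent.
Variable F : finFieldType.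

Definition lbounded (c : Z -> F) := exists N : Z, forall k : Z, Z.lt k N -> c k = 0%R.

Record laurent := Laurent { coef :> Z -> F; coef_lb : lbounded coef }.

Definition lb (a : laurent) : Z :=
  proj1_sig (ClassicalEpsilon.constructive_indefinite_description _ (coef_lb a)).

Lemma lbP (a : laurent) k : Z.lt k (lb a) -> a k = 0%R.
Proof.
rewrite /lb; case: (ClassicalEpsilon.constructive_indefinite_description _ _) => N HN /=.
exact: HN.
Qed.

Lemma lzero_lb : lbounded (fun _ => 0%R).
Proof. by exists Z0. Qed.
Definition lzero := Laurent lzero_lb.

Lemma lone_lb : lbounded (fun k => if Z.eqb k Z0 then 1%R else 0%R).
Proof.
exists Z0 => k Hk; have -> : Z.eqb k Z0 = false by apply/Z.eqb_neq; lia.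
by [].
Qed.
Definition lone := Laurent lone_lb.

Lemma ladd_lb (a b : laurent) : lbounded (fun k => (a k + b k)%R).
Proof.
exists (Z.min (lb a) (lb b)) => k Hk.
by rewrite !lbP ?addr0 //; lia.
Qed.
Definition ladd (a b : laurent) := Laurent (ladd_lb a b).

Lemma lopp_lb (a : laurent) : lbounded (fun k => (- a k)%R).
Proof. by exists (lb a) => k Hk; rewrite lbP ?oppr0. Qed.
Definition lopp (a : laurent) := Laurent (lopp_lb a).

Definition lsub (a b : laurent) := ladd a (lopp b).

(* Cauchy product: (a*b)_k = sum_{i + j = k} a_i b_j, a finite sum since
   only indices i >= lb a, j >= lb b contribute. *)
Definition lmul_coef (a b : laurent) (k : Z) : F :=
  (\sum_(j < (Z.to_nat (Z.sub (Z.sub k (lb a)) (lb b))).+1)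
     a (Z.add (lb a) (Z.of_nat j)) * b (Z.sub (Z.sub k (lb a)) (Z.of_nat j)))%R.

Lemma lmul_lb (a b : laurent) : lbounded (lmul_coef a b).
Proof.
exists (Z.add (lb a) (lb b)) => k Hk; rewrite /lmul_coef big1 // => j _.
by rewrite (lbP (a := b)) ?mulr0 //; lia.
Qed.
Definition lmul (a b : laurent) := Laurent (lmul_lb a b).

Definition lpow (a : laurent) (n : nat) : laurent := iter n (lmul a) lone.

(* Embedding of F((T)) into F((S)) with T = S^e:  sum c_k T^k |-> sum c_k S^{ek} *)
Lemma lembed_lb (e : nat) (a : laurent) :
  lbounded (fun k => if ((0 < e)%N && Z.eqb (Z.modulo k (Z.of_nat e)) Z0)
                     then a (Z.div k (Z.of_nat e)) else 0%R).
Proof.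
exists (Z.mul (lb a) (Z.of_nat e)) => k Hk.
case: (0 < e)%N / idP => [e0|] //=.
case: Z.eqb => //; apply: lbP.
apply: Z.div_lt_upper_bound; first by move/ltP: e0; lia.
lia.
Qed.
Definition lembed (e : nat) (a : laurent) := Laurent (lembed_lb e a).

Definition is_val (a : laurent) (v : Z) :=
  a v <> 0%R /\ forall k, Z.lt k v -> a k = 0%R.

Definition labs (e : nat) (a : laurent) : R :=
  match ClassicalEpsilon.excluded_middle_informative (exists v, is_val a v) with
  | left H => Rpower (INR #|F|)
                (Rdiv (Ropp (IZR (proj1_sig (ClassicalEpsilon.constructive_indefinite_description _ H))))
                      (INR e))
  | right _ => R0
  end.

(* The (unique, as the paper notes) q^m-th root in K_m = F((S)), S^{q^m} = T,
   of an element x of K = F((T)). *)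
Definition lroot (m : nat) (x : laurent) : laurent :=
  match ClassicalEpsilon.excluded_middle_informative
          (exists y, lpow y (#|F| ^ m) = lembed (#|F| ^ m) x) with
  | left H => proj1_sig (ClassicalEpsilon.constructive_indefinite_description _ H)
  | right _ => lzero
  end.

End Laurent.

Section CXL.
Variables (F : finFieldType) (X : topologicalType) (e : nat).
Local Notation L := (laurent F).

Definition lcontinuous (g : X -> L) : Prop :=
  forall (x : X) (eps : R), Rlt R0 eps ->
    nbhs x (fun y : X => Rlt (labs e (lsub (g y) (g x))) eps).

Fixpoint psum (a : nat -> L) (b : nat -> X -> L) (x : X) (M : nat) : L :=
  match M with
  | O => lzero F
  | S M' => ladd (psum a b x M') (lmul (a M') (b M' x))
  end.

Definition null_seq (a : nat -> L) : Prop :=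
  forall eps : R, Rlt R0 eps -> exists N, forall n, (N <= n)%N -> Rle (labs e (a n)) eps.

Definition sum_to (g : X -> L) (a : nat -> L) (b : nat -> X -> L) : Prop :=
  forall eps : R, Rlt R0 eps -> exists N, forall M, (N <= M)%N ->
    forall x, Rle (labs e (lsub (g x) (psum a b x M))) eps.

Definition sup_norm_is (g : X -> L) (M : R) : Prop :=
  is_lub (fun r => exists x, r = labs e (g x)) M.

Definition max_abs_is (a : nat -> L) (M : R) : Prop :=
  (forall n, Rle (labs e (a n)) M) /\ exists n, labs e (a n) = M.

Definition orthonormal_basis (b : nat -> X -> L) : Prop :=
  (forall n, lcontinuous (b n)) /\
  forall g, lcontinuous g ->
    exists a, [/\ null_seq a, sum_to g a b,
               (exists M, max_abs_is a M /\ sup_norm_is g M) &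
               forall a', null_seq a' -> sum_to g a' b -> a' = a].

End CXL.

(* Main.v *)
Require Import Defs.
From Stdlib Require Import ZArith Reals Lia Lra ProofIrrelevance FunctionalExtensionality Classical.
From HB Require Import structures.
From mathcomp Require Import all_boot all_order all_algebra all_field.
From mathcomp Require Import all_classical all_reals all_analysis.
From mathcomp Require Import zify.

Set Implicit Arguments.
Unset Strict Implicit.
Unset Printing Implicit Defensive.
Import GRing.Theory.
Delimit Scope Z_scope with ZZ.
Delimit Scope R_scope with RR.
Local Open Scope ring_scope.

Section LA.
Variable F : finFieldType.
Local Notation L := (laurent F).

Lemma leqL (a b : L) : (forall k, a k = b k) -> a = b.
Proof.
case: a b => [ca pa] [cb pb] /= H.
have E : ca = cb by apply: functional_extensionality.
subst cb; by rewrite (proof_irrelevance _ pa pb).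
Qed.

Definition vb (a : L) (K : Z) := forall k, (k < K)%ZZ -> a k = 0%R.

Definition zsum (h : Z -> F) (M : Z) (n : nat) : F :=
  (\sum_(0 <= j < n) h (M + Z.of_nat j)%ZZ)%R.

Lemma zsum_win (h : Z -> F) (A : Z) (n : nat) (M : Z) (W : nat) :
  (forall i, h i <> 0%R -> (A <= i < A + Z.of_nat n)%ZZ) ->
  (M <= A)%ZZ -> (A + Z.of_nat n <= M + Z.of_nat W)%ZZ ->
  zsum h A n = zsum h M W.
Proof.
move=> Hs HMA HW.
pose d := Z.to_nat (A - M).
have d1 : (d <= d + n)%N by rewrite leq_addr.
have d2 : (d + n <= W)%N by apply/leP; lia.
rewrite /zsum [RHS](big_cat_nat (leq0n d) (leq_trans d1 d2)) /=.
rewrite [X in (_ + X)%R](big_cat_nat d1 d2) /=.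
rewrite [X in (X + _)%R]big1_seq ?add0r; last first.
  move=> j; rewrite mem_index_iota => /andP[_ Hj].
  apply: Classical_Prop.NNPP => /Hs; lia.
rewrite [X in (_ + X)%R]big1_seq ?addr0; last first.
  move=> j; rewrite mem_index_iota => /andP[Hj Hj2].
  apply: Classical_Prop.NNPP => /Hs; lia.
have -> : (\sum_(d <= i < d + n) h (M + Z.of_nat i)%ZZ = \sum_(0 <= i < n) h (M + Z.of_nat (i + d))%ZZ)%R.
  by rewrite -{1}[d]add0n big_addn addKn.
apply: eq_bigr => j _; congr h; lia.
Qed.

Lemma zsum_eq (h : Z -> F) (A : Z) (n : nat) (A' : Z) (n' : nat) :
  (forall i, h i <> 0%R -> (A <= i < A + Z.of_nat n)%ZZ /\ (A' <= i < A' + Z.of_nat n')%ZZ) ->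
  zsum h A n = zsum h A' n'.
Proof.
move=> Hs.
pose M := Z.min A A'. pose W := Z.to_nat (Z.max (A + Z.of_nat n) (A' + Z.of_nat n') - M).
have E1 : zsum h A n = zsum h M W.
  apply: zsum_win; [by move=> i /Hs [] | lia | lia].
have E2 : zsum h A' n' = zsum h M W.
  apply: zsum_win; [by move=> i /Hs [] | lia | lia].
by rewrite E1 E2.
Qed.

Lemma lbP' (a : L) : vb a (lb a).
Proof. move=> k; exact: Defs.lbP. Qed.

Lemma lmulE (a b : L) (La Lb : Z) k : vb a La -> vb b Lb ->
  lmul a b k = zsum (fun i => a i * b (k - i)%ZZ)%R La (Z.to_nat (k - La - Lb)).+1.
Proof.
move=> Ha Hb.
rewrite /= /lmul_coef.
have -> : (\sum_(j < (Z.to_nat (k - lb a - lb b)).+1)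
     a (lb a + Z.of_nat j)%ZZ * b (k - lb a - Z.of_nat j)%ZZ)%R =
  zsum (fun i => a i * b (k - i)%ZZ)%R (lb a) (Z.to_nat (k - lb a - lb b)).+1.
  rewrite /zsum big_mkord; apply: eq_bigr => j _; congr (_ * b _)%R; lia.
apply: zsum_eq => i Hi.
have Hai : a i <> 0%R by move=> E; apply: Hi; rewrite E mul0r.
have Hbi : b (k - i)%ZZ <> 0%R by move=> E; apply: Hi; rewrite E mulr0.
have h1 : (La <= i)%ZZ by case: (Z.lt_ge_cases i La) => // /Ha.
have h2 : (lb a <= i)%ZZ by case: (Z.lt_ge_cases i (lb a)) => // /(lbP' (a:=a)).
have h3 : (Lb <= k - i)%ZZ by case: (Z.lt_ge_cases (k - i) Lb) => // /Hb.
have h4 : (lb b <= k - i)%ZZ by case: (Z.lt_ge_cases (k - i) (lb b)) => // /(lbP' (a:=b)).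
lia.
Qed.


Definition Pl (a : L) (La : Z) (K : nat) : {poly F} := \poly_(i < K) a (La + Z.of_nat i)%ZZ.

Lemma lmul_poly (a b : L) (La Lb k : Z) (K : nat) : vb a La -> vb b Lb ->
  (La + Lb <= k)%ZZ -> (Z.to_nat (k - La - Lb) < K)%N ->
  lmul a b k = (Pl a La K * Pl b Lb K)`_(Z.to_nat (k - La - Lb)).
Proof.
move=> Ha Hb Hk HK; rewrite (lmulE _ Ha Hb) coefM /zsum big_mkord.
apply: eq_bigr => j _; rewrite !coef_poly.
have Hj := ltn_ord j.
have -> : (j < K)%N by apply: leq_ltn_trans HK; rewrite -ltnS.
have -> : (Z.to_nat (k - La - Lb) - j < K)%N.
  by apply: leq_ltn_trans HK; exact: leq_subr.
congr (_ * b _)%R; lia.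
Qed.

Lemma lmul_vb (a b : L) (La Lb : Z) : vb a La -> vb b Lb -> vb (lmul a b) (La + Lb)%ZZ.
Proof.
move=> Ha Hb k Hk; rewrite (lmulE _ Ha Hb) /zsum big1_seq // => j _.
case: (Z.lt_ge_cases (La + Z.of_nat j)%ZZ La) => H.
  by rewrite Ha ?mul0r.
by rewrite Hb ?mulr0 //; lia.
Qed.

Lemma vbW (a : L) K K' : (K' <= K)%ZZ -> vb a K -> vb a K'.
Proof. move=> H Ha k Hk; apply: Ha; lia. Qed.

Lemma lmulC (a b : L) : lmul a b = lmul b a.
Proof.
apply: leqL => k.
have Ha := lbP' (a:=a); have Hb := lbP' (a:=b).
case: (Z.lt_ge_cases k (lb a + lb b)) => Hk.
  rewrite (lmul_vb Ha Hb) // (lmul_vb Hb Ha) //; lia.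
rewrite (@lmul_poly _ _ _ _ _ (Z.to_nat (k - lb a - lb b)).+1 Ha Hb) //.
rewrite (@lmul_poly _ _ _ _ _ (Z.to_nat (k - lb a - lb b)).+1 Hb Ha); try lia.
  by rewrite mulrC; congr (_ `_ _); lia.
Qed.

Definition trunc (K : nat) (p : {poly F}) : {poly F} := \poly_(i < K) p`_i.

Lemma coef_truncM K (p q : {poly F}) n : (n < K)%N -> (trunc K p * q)`_n = (p * q)`_n.
Proof.
move=> Hn; rewrite !coefM; apply: eq_bigr => j _; rewrite coef_poly.
by rewrite (leq_ltn_trans _ Hn) // -ltnS.
Qed.

Lemma Pl_mul (a b : L) La Lb K : vb a La -> vb b Lb ->
  Pl (lmul a b) (La + Lb) K = trunc K (Pl a La K * Pl b Lb K).
Proof.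
move=> Ha Hb; apply/polyP => i; rewrite !coef_poly.
case: ifP => // HiK.
rewrite (@lmul_poly _ _ _ _ _ K Ha Hb); [|lia|].
  by congr (_ `_ _); lia.
have -> : Z.to_nat (La + Lb + Z.of_nat i - La - Lb) = i by lia.
done.
Qed.

Lemma lmulA (a b c : L) : lmul a (lmul b c) = lmul (lmul a b) c.
Proof.
apply: leqL => k.
have Ha := lbP' (a:=a); have Hb := lbP' (a:=b); have Hc := lbP' (a:=c).
have Hab := lmul_vb Ha Hb; have Hbc := lmul_vb Hb Hc.
case: (Z.lt_ge_cases k (lb a + lb b + lb c)) => Hk.
  rewrite (lmul_vb Ha Hbc) ?(lmul_vb Hab Hc) //; lia.
set n := Z.to_nat (k - lb a - lb b - lb c).
rewrite (@lmul_poly _ _ _ _ _ n.+1 Hab Hc) //; last by rewrite /n; apply/ltP; lia.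
rewrite (@lmul_poly _ _ _ _ _ n.+1 Ha Hbc); [|lia|]; last first.
  by apply/ltP; lia.
rewrite (Pl_mul _ Ha Hb) (Pl_mul _ Hb Hc).
have -> : Z.to_nat (k - lb a - (lb b + lb c)) = n by rewrite /n; lia.
have -> : Z.to_nat (k - (lb a + lb b) - lb c) = n by rewrite /n; lia.
rewrite coef_truncM // mulrC coef_truncM // mulrC mulrA.
done.
Qed.

Lemma vb_add (a b : L) K : vb a K -> vb b K -> vb (ladd a b) K.
Proof. by move=> Ha Hb k Hk /=; rewrite Ha ?Hb ?addr0. Qed.

Lemma lmulDl (a b c : L) : lmul (ladd a b) c = ladd (lmul a c) (lmul b c).
Proof.
apply: leqL => k /=.
set La := Z.min (lb a) (lb b).
have Ha : vb a La by apply: vbW (lbP' (a:=a)); lia.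
have Hb : vb b La by apply: vbW (lbP' (a:=b)); lia.
have Hc := lbP' (a:=c).
rewrite -[lmul_coef (ladd a b) c k]/(lmul (ladd a b) c k).
rewrite -[lmul_coef a c k]/(lmul a c k) -[lmul_coef b c k]/(lmul b c k).
rewrite (lmulE _ (vb_add Ha Hb) Hc) (lmulE _ Ha Hc) (lmulE _ Hb Hc).
by rewrite /zsum -big_split /=; apply: eq_bigr => j _; rewrite mulrDl.
Qed.

Lemma lone_vb : vb (lone F) 0.
Proof. move=> k Hk /=; have -> : Z.eqb k 0 = false by apply/Z.eqb_neq; lia. done. Qed.

Lemma lmul1 (a : L) : lmul (lone F) a = a.
Proof.
apply: leqL => k.
have Ha := lbP' (a:=a).
case: (Z.lt_ge_cases k (0 + lb a)) => Hk.
  by rewrite (lmul_vb lone_vb Ha) // Ha //; lia.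
rewrite (@lmul_poly _ _ _ _ _ (Z.to_nat (k - 0 - lb a)).+1 lone_vb Ha) //.
have -> : Pl (lone F) 0 (Z.to_nat (k - 0 - lb a)).+1 = 1%R.
  apply/polyP => i; rewrite coef_poly coef1 /=.
  case: ifP => Hi; case: i Hi => [|i] Hi //=.
rewrite mul1r coef_poly ltnSn; f_equal; lia.
Qed.

Lemma laddA : associative (@ladd F).
Proof. by move=> a b c; apply: leqL => k /=; rewrite addrA. Qed.
Lemma laddC : commutative (@ladd F).
Proof. by move=> a b; apply: leqL => k /=; rewrite addrC. Qed.
Lemma ladd0 : left_id (lzero F) (@ladd F).
Proof. by move=> a; apply: leqL => k /=; rewrite add0r. Qed.
Lemma laddN : left_inverse (lzero F) (@lopp F) (@ladd F).
Proof. by move=> a; apply: leqL => k /=; rewrite addNr. Qed.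

HB.instance Definition _ := gen_eqMixin L.
HB.instance Definition _ := gen_choiceMixin L.
HB.instance Definition _ := GRing.isZmodule.Build L laddA laddC ladd0 laddN.

Lemma lone_neq0 : lone F != lzero F.
Proof.
apply/eqP => /(f_equal (fun a : L => a 0%ZZ)) /=; apply/eqP; exact: oner_neq0.
Qed.

HB.instance Definition _ := GRing.Zmodule_isComNzRing.Build L lmulA lmulC lmul1 lmulDl lone_neq0.


Lemma coefD (a b : L) k : (a + b) k = a k + b k. Proof. by []. Qed.
Lemma coefN (a : L) k : (- a) k = - a k. Proof. by []. Qed.
Lemma coefB (a b : L) k : (a - b) k = a k - b k. Proof. by []. Qed.
Lemma coef0 k : (0 : L) k = 0. Proof. by []. Qed.
Lemma coef1L k : (1 : L) k = if Z.eqb k 0 then 1 else 0. Proof. by []. Qed.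
Lemma mulLE (a b : L) : a * b = lmul a b. Proof. by []. Qed.

Lemma coef_sum I (r : seq I) (P : pred I) (G : I -> L) k :
  (\sum_(i <- r | P i) G i) k = \sum_(i <- r | P i) G i k.
Proof. by apply: (big_morph (fun a : L => a k)) => //. Qed.

Lemma lpowE (a : L) n : lpow a n = a ^+ n.
Proof. by elim: n => [|n IH] //=; rewrite exprS -IH. Qed.

Lemma vb_mul (a b : L) (La Lb : Z) : vb a La -> vb b Lb -> vb (a * b) (La + Lb)%ZZ.
Proof. exact: lmul_vb. Qed.

Lemma vb_pow (a : L) K n : vb a K -> vb (a ^+ n) (Z.of_nat n * K)%ZZ.
Proof.
move=> Ha; elim: n => [|n IH].
  by rewrite expr0; apply: vbW lone_vb; lia.
rewrite exprS; apply: (vbW (K := (K + Z.of_nat n * K)%ZZ)); first lia.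
exact: vb_mul.
Qed.

Lemma mono_lb (c : F) (j : Z) : lbounded (fun k => if Z.eqb k j then c else 0).
Proof. exists j => k Hk; have -> : Z.eqb k j = false by apply/Z.eqb_neq; lia. done. Qed.
Definition mono c j : L := Laurent (mono_lb c j).

Lemma mono_vb c j : vb (mono c j) j.
Proof. move=> k Hk /=; have -> : Z.eqb k j = false by apply/Z.eqb_neq; lia. done. Qed.

Lemma mono_mul c j (a : L) k : (mono c j * a) k = c * a (k - j)%ZZ.
Proof.
rewrite mulLE (lmulE _ (@mono_vb c j) (lbP' (a:=a))) /zsum big_nat_recl // big1 ?addr0.
  have -> : (j + Z.of_nat 0)%ZZ = j by lia.
  by rewrite /= Z.eqb_refl.
move=> i _ /=.
have -> : Z.eqb (j + Z.of_nat i.+1) j = false by apply/Z.eqb_neq; lia.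
by rewrite mul0r.
Qed.

Lemma mono_mono c d i j : mono c i * mono d j = mono (c * d) (i + j)%ZZ.
Proof.
apply: leqL => k; rewrite mono_mul /=.
case: (Z.eqb_spec (k - i) j) => H; case: (Z.eqb_spec k (i + j)) => H' //; try lia.
  by rewrite mulr0.
Qed.

Lemma mono_pow c i n : (mono c i) ^+ n = mono (c ^+ n) (Z.of_nat n * i)%ZZ.
Proof.
elim: n => [|n IH].
  by apply: leqL => k /=; rewrite expr0.
by rewrite exprS IH mono_mono exprS; congr mono; lia.
Qed.

Lemma natrL n k : (n%:R : L) k = if Z.eqb k 0 then n%:R else 0.
Proof.
elim: n => [|n IH]; first by case: Z.eqb.
by rewrite mulrS coefD IH coef1L; case: Z.eqb; rewrite ?addr0 // mulrS.
Qed.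

Variable p : nat.
Hypothesis pcharFp : p \in [pchar F].

Lemma pcharL : p \in [pchar L].
Proof.
rewrite inE (pcharf_prime pcharFp) /=; apply/eqP/leqL => k.
by rewrite natrL (pcharf0 pcharFp); case: Z.eqb.
Qed.

Lemma frobL j (x y : L) : (x + y) ^+ (p ^ j) = x ^+ (p ^ j) + y ^+ (p ^ j).
Proof.
elim: j => [|j IH]; first by rewrite !expr1.
rewrite expnSr !exprM IH.
by have := pFrobenius_autD_comm pcharL (mulrC (x ^+ (p ^ j)) (y ^+ (p ^ j))).
Qed.

Lemma frobL_sum j (W : nat) (G : nat -> L) :
  (\sum_(0 <= i < W) G i) ^+ (p ^ j) = \sum_(0 <= i < W) (G i) ^+ (p ^ j).
Proof.
elim: W => [|W IH].
  by rewrite !big_nil expr0n /= expn_eq0 (gtn_eqF (prime_gt0 (pcharf_prime pcharFp))).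
by rewrite !big_nat_recr //= frobL IH.
Qed.


Lemma sum_one (W j0 : nat) (P : nat -> bool) (c : nat -> F) : (j0 < W)%N ->
  (forall j, (j < W)%N -> P j -> j = j0) -> P j0 ->
  \sum_(0 <= j < W) (if P j then c j else 0) = c j0.
Proof.
move=> HW Hu Hp.
rewrite (bigD1_seq j0) ?iota_uniq ?mem_index_iota //= Hp.
rewrite big_seq_cond big1 ?addr0 // => j /andP[Hin Hj].
rewrite mem_index_iota in Hin.
by case: ifP => // /(Hu _ (andP Hin).2) E; rewrite E eqxx in Hj.
Qed.

Lemma sum_none (W : nat) (P : nat -> bool) (c : nat -> F) :
  (forall j, P j = false) -> \sum_(0 <= j < W) (if P j then c j else 0) = 0.
Proof. by move=> H; rewrite big1 // => j _; rewrite H. Qed.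

End LA.

Section Frob.
Variable F : finFieldType.
Local Notation L := (laurent F).

Lemma cardF_pow : exists p s, p \in [pchar F] /\ #|F| = (p ^ s)%N.
Proof.
case: (finPcharP F) => p pr pc; exists p, (logn p #|F|); split => //.
exact: (card_pprimeChar pc).
Qed.

Lemma expf_cardN m (c : F) : c ^+ (#|F| ^ m) = c.
Proof.
elim: m => [|m IH]; first by rewrite expr1.
by rewrite expnSr exprM IH expf_card.
Qed.

Lemma lembed_pow (m : nat) (x : L) : x ^+ (#|F| ^ m) = lembed (#|F| ^ m) x.
Proof.
case: cardF_pow => p [s [pc cardF]].
set N := (#|F| ^ m)%N.
have HN : N = (p ^ (s * m))%N by rewrite /N cardF -expnM.
have N0 : (0 < N)%N by rewrite expn_gt0; apply/orP; left; apply/card_gt0P; exists 0%R.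
apply: leqL => k.
set Lx := lb x. set W := Z.to_nat (Z.abs k - Lx + 1).
pose t := \sum_(0 <= j < W) mono (x (Lx + Z.of_nat j)%ZZ) (Lx + Z.of_nat j)%ZZ.
have vr : vb (x - t) (Lx + Z.of_nat W)%ZZ.
  move=> k' Hk'; rewrite coefB /t coef_sum /=.
  case: (Z.lt_ge_cases k' Lx) => H.
    rewrite lbP' // sum_none ?subrr // => j; apply/Z.eqb_neq; lia.
  rewrite (sum_one (j0:=Z.to_nat (k' - Lx))); first last.
  - by apply/Z.eqb_eq; lia.
  - by move=> j _ /Z.eqb_eq; lia.
  - by apply/ltP; lia.
  have -> : (Lx + Z.of_nat (Z.to_nat (k' - Lx)))%ZZ = k' by lia.
  by rewrite subrr.
have -> : x ^+ N = t ^+ N + (x - t) ^+ N.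
  by rewrite HN -frobL // addrC subrK.
rewrite coefD (@vb_pow _ _ _ N vr); last first.
  rewrite /W; nia.
rewrite addr0 HN /t frobL_sum // -HN.
have -> : \sum_(0 <= i < W) mono (x (Lx + Z.of_nat i)%ZZ) (Lx + Z.of_nat i)%ZZ ^+ N =
   \sum_(0 <= i < W) mono (x (Lx + Z.of_nat i)%ZZ) (Z.of_nat N * (Lx + Z.of_nat i))%ZZ.
  by apply: eq_bigr => j _; rewrite mono_pow expf_cardN.
rewrite coef_sum /= N0 /=.
have NZ : (0 < Z.of_nat N)%ZZ by lia.
have Hdm := Z.div_mod k (Z.of_nat N) ltac:(lia).
have Hmb := Z.mod_pos_bound k (Z.of_nat N) NZ.
case: (Z.eqb_spec (k mod Z.of_nat N) 0) => Hm.
  set q := (k / Z.of_nat N)%ZZ in Hdm *.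
  case: (Z.lt_ge_cases q Lx) => Hq.
    rewrite lbP' // sum_none // => j; apply/Z.eqb_neq; nia.
  rewrite (sum_one (j0:=Z.to_nat (q - Lx))); first last.
  - by apply/Z.eqb_eq; nia.
  - by move=> j _ /Z.eqb_eq; nia.
  - apply/ltP; rewrite /W; nia.
  by congr (x _); lia.
rewrite sum_none // => j; apply/Z.eqb_neq => E.
apply: Hm; rewrite E Z.mul_comm Z.mod_mul //; lia.
Qed.


Lemma lembed_inj (N : nat) (x y : L) : (0 < N)%N -> lembed N x = lembed N y -> x = y.
Proof.
move=> N0 E; apply: leqL => k.
have := f_equal (fun a : L => a (k * Z.of_nat N)%ZZ) E => /=.
rewrite N0 /= Z.mod_mul ?Z.div_mul //=; lia.
Qed.

Lemma lrootE m (x : L) : lroot m x = x.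
Proof.
have N0 : (0 < #|F| ^ m)%N by rewrite expn_gt0; apply/orP; left; apply/card_gt0P; exists 0%R.
rewrite /lroot; case: ClassicalEpsilon.excluded_middle_informative => [H|H]; last first.
  by exfalso; apply: H; exists x; rewrite lpowE lembed_pow.
case: (ClassicalEpsilon.constructive_indefinite_description _ H) => y /=.
by rewrite lpowE lembed_pow => /lembed_inj; apply.
Qed.

End Frob.

Section Val.
Variable F : finFieldType.
Local Notation L := (laurent F).

Lemma val_ex (a : L) : (forall k, a k = 0) \/ exists v, is_val a v.
Proof.
case: (Classical_Prop.classic (exists k, a k <> 0)) => [[k Hk]|H]; last first.
  left => k; apply: Classical_Prop.NNPP => Hk; apply: H; by exists k.
right.
have Hk0 : (lb a <= k)%ZZ by case: (Z.lt_ge_cases k (lb a)) => // /(lbP' (a:=a)).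
have ex : exists j, (fun j => a (lb a + Z.of_nat j)%ZZ != 0) j.
  exists (Z.to_nat (k - lb a)) => /=; apply/eqP.
  by have -> : (lb a + Z.of_nat (Z.to_nat (k - lb a)))%ZZ = k by lia.
case: (ex_minnP ex) => j /eqP Hj Hmin.
exists (lb a + Z.of_nat j)%ZZ; split => // k' Hk'.
case: (Z.lt_ge_cases k' (lb a)) => H; first exact: lbP'.
apply: Classical_Prop.NNPP => Hne.
have := Hmin (Z.to_nat (k' - lb a)).
have -> : (lb a + Z.of_nat (Z.to_nat (k' - lb a)))%ZZ = k' by lia.
move=> /(_ (introN eqP Hne)); lia.
Qed.

Lemma val_uniq (a : L) v v' : is_val a v -> is_val a v' -> v = v'.
Proof.
move=> [H1 H2] [H1' H2'].
case: (Z.lt_total v v') => [H|[//|H]].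
- by exfalso; apply: H1; apply: H2'.
- by exfalso; apply: H1'; apply: H2.
Qed.

Variable e : nat.
Hypothesis He : (0 < e)%N.

Local Notation ln := Stdlib.Reals.Rpower.ln.
Local Notation exp := Stdlib.Reals.Rtrigo_def.exp.
Definition q := INR #|F|.
Lemma q_gt1 : (1 < q)%RR.
Proof. apply: lt_1_INR; apply/ltP; exact: finNzRing_gt1. Qed.

Definition rp (K : Z) := Rpower q (Ropp (IZR K) / INR e).

Lemma eR_pos : (0 < INR e)%RR.
Proof. apply: lt_0_INR; apply/ltP; exact: He. Qed.

Lemma rp_pos K : (0 < rp K)%RR.
Proof. rewrite /rp /Rpower; exact: exp_pos. Qed.

Lemma rp_lt K K' : (K < K')%ZZ -> (rp K' < rp K)%RR.
Proof.
move=> H; apply: Rpower_lt; first exact: q_gt1.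
rewrite /Rdiv; apply: Rmult_lt_compat_r; first by apply: Rinv_0_lt_compat; exact: eR_pos.
by apply: Ropp_lt_contravar; apply: IZR_lt.
Qed.

Lemma rp_le K K' : (K <= K')%ZZ -> (rp K' <= rp K)%RR.
Proof.
move=> H; case: (Z.eq_dec K K') => [<-|H']; first by apply: Rle_refl.
by apply: Rlt_le; apply: rp_lt; lia.
Qed.

Lemma labs_val (a : L) v : is_val a v -> labs e a = rp v.
Proof.
move=> Hv; rewrite /labs; case: ClassicalEpsilon.excluded_middle_informative => [H|H]; last first.
  by exfalso; apply: H; exists v.
case: (ClassicalEpsilon.constructive_indefinite_description _ H) => v' Hv' /=.
by rewrite (val_uniq Hv' Hv).
Qed.

Lemma labs_zero (a : L) : (forall k, a k = 0) -> labs e a = 0%RR.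
Proof.
move=> Hz; rewrite /labs; case: ClassicalEpsilon.excluded_middle_informative => [H|//].
by exfalso; case: H => v [Hv _]; apply: Hv.
Qed.

Lemma labs_ge0 (a : L) : (0 <= labs e a)%RR.
Proof.
case: (val_ex a) => [Hz|[v Hv]]; first by rewrite labs_zero //; apply: Rle_refl.
by rewrite (labs_val Hv); apply: Rlt_le; apply: rp_pos.
Qed.

Lemma vb_labs (a : L) K : vb a K <-> (labs e a <= rp K)%RR.
Proof.
case: (val_ex a) => [Hz|[v Hv]].
  rewrite labs_zero //; split => _; [apply: Rlt_le; apply: rp_pos | by move=> k _].
rewrite (labs_val Hv); split.
  move=> Hb; apply: rp_le; case: (Z.lt_ge_cases v K) => // H.
  by case: Hv => Hv _; exfalso; apply: Hv; apply: Hb.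
move=> Hr k Hk; case: Hv => _; apply.
case: (Z.lt_ge_cases k v) => // H; exfalso.
have H2 : (rp K < rp v)%RR by apply: rp_lt; lia.
exact: (Rlt_not_le _ _ H2 Hr).
Qed.

Lemma labs_lt_vb (a : L) K : (labs e a < rp K)%RR -> vb a (K + 1)%ZZ.
Proof.
case: (val_ex a) => [Hz|[v Hv]]; first by move=> _ k _.
rewrite (labs_val Hv) => Hr k Hk; case: Hv => _; apply.
case: (Z.lt_ge_cases k v) => // H; exfalso.
have H2 : (rp K <= rp v)%RR by apply: rp_le; lia.
exact: (Rlt_not_le _ _ Hr H2).
Qed.

Lemma rp_small (eps : R) : (0 < eps)%RR -> exists K, (rp K < eps)%RR.
Proof.
move=> He0.
have lq : (0 < ln q)%RR by rewrite -ln_1; apply: ln_increasing; [lra| exact: q_gt1].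
have eR := eR_pos.
set z := ln eps.
exists (up (- z * INR e / ln q)).
have [H1 _] := archimed (- z * INR e / ln q).
set A := IZR (up _) in H1 *.
rewrite /rp /Rpower -(exp_ln eps) //; apply: exp_increasing; rewrite -/z.
have h2 : (- z * INR e < A * ln q)%RR.
  have := Rmult_lt_compat_r (ln q) _ _ lq H1.
  by rewrite /Rdiv Rmult_assoc Rinv_l ?Rmult_1_r //; lra.
have h3 : (- z < A * ln q / INR e)%RR.
  apply: (Rmult_lt_reg_r (INR e)) => //.
  by rewrite /Rdiv Rmult_assoc Rinv_l ?Rmult_1_r //; lra.
have -> : (- A / INR e * ln q = - (A * ln q / INR e))%RR by field; lra.
lra.
Qed.

Lemma eps_vb (eps : R) : (0 < eps)%RR -> exists K, forall a : L, vb a K -> (labs e a < eps)%RR.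
Proof.
move=> /rp_small [K HK]; exists K => a /vb_labs H.
exact: Rle_lt_trans H HK.
Qed.

End Val.

Section Transfer.
Variables (F : finFieldType) (X : topologicalType).
Local Notation L := (laurent F).

Definition lcv (g : X -> L) := forall x K, nbhs x (fun y => vb (g y - g x) K).
Definition nullv (a : nat -> L) := forall K, exists N0, forall n, (N0 <= n)%N -> vb (a n) K.
Definition sumv (g : X -> L) (a : nat -> L) (b : nat -> X -> L) :=
  forall K, exists N0, forall M, (N0 <= M)%N -> forall x, vb (g x - psum a b x M) K.
Definition NE (a : nat -> L) (g : X -> L) :=
  forall K, (forall n, vb (a n) K) <-> (forall x, vb (g x) K).
Definition ONBv (b : nat -> X -> L) :=
  (forall n, lcv (b n)) /\
  forall g, lcv g -> exists a, [/\ nullv a, sumv g a b, NE a g &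
     forall a', nullv a' -> sumv g a' b -> a' = a].

Variable e : nat.
Hypothesis He : (0 < e)%N.

Lemma T1 (g : X -> L) : lcontinuous e g <-> lcv g.
Proof.
split.
  move=> H x K; apply: (filterS _ (H x (rp F e K) (rp_pos F e K))) => y /= Hy.
  by apply/(vb_labs He); apply: Rlt_le.
move=> H x eps Heps; case: (eps_vb F He Heps) => K HK.
by apply: (filterS _ (H x K)) => y /= /HK.
Qed.

Lemma T2 (a : nat -> L) : null_seq e a <-> nullv a.
Proof.
split.
  move=> H K; case: (H (rp F e K) (rp_pos F e K)) => N0 HN; exists N0 => n /HN.
  by move/(vb_labs He).
move=> H eps Heps; case: (eps_vb F He Heps) => K HK.
case: (H K) => N0 HN; exists N0 => n /HN /HK; exact: Rlt_le.
Qed.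

Lemma T3 (g : X -> L) a b : sum_to e g a b <-> sumv g a b.
Proof.
split.
  move=> H K; case: (H (rp F e K) (rp_pos F e K)) => N0 HN; exists N0 => M HM x.
  by apply/(vb_labs He); apply: HN.
move=> H eps Heps; case: (eps_vb F He Heps) => K HK.
case: (H K) => N0 HN; exists N0 => M HM x; apply: Rlt_le; apply: HK; exact: HN.
Qed.

Lemma T4 (a : nat -> L) (g : X -> L) :
  (exists M, max_abs_is e a M /\ sup_norm_is e g M) -> NE a g.
Proof.
move=> [M [[Ha [n0 Hn0]] [Hub Hl]]] K; split.
  move=> Hv x; apply/(vb_labs He).
  apply: Rle_trans (Hub _ (ex_intro _ x erefl)) _.
  by rewrite -Hn0; apply/(vb_labs He).
move=> Hv n; apply/(vb_labs He); apply: Rle_trans (Ha n) _.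
apply: Hl => r [x ->]; exact/(vb_labs He).
Qed.

Lemma argmax (h : nat -> R) B : (0 < B)%N -> exists i, (i < B)%N /\ forall j, (j < B)%N -> (h j <= h i)%RR.
Proof.
elim: B => [//|B IH] _.
case: B IH => [|B] IH.
  by exists 0%N; split => // j; rewrite ltnS leqn0 => /eqP ->; apply: Rle_refl.
case: (IH erefl) => i [Hi Hm].
case: (Rle_dec (h B.+1) (h i)) => H.
  exists i; split; first by apply: ltn_trans Hi _.
  move=> j; rewrite ltnS leq_eqVlt => /orP[/eqP ->|]; [exact: H|exact: Hm].
exists B.+1; split => // j; rewrite ltnS leq_eqVlt => /orP[/eqP ->|/Hm Hj].
  exact: Rle_refl.
apply: Rle_trans Hj _; apply: Rlt_le; exact: Rnot_le_lt.
Qed.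

Lemma T5 (x0 : X) (a : nat -> L) (g : X -> L) : nullv a -> NE a g ->
  exists M, max_abs_is e a M /\ sup_norm_is e g M.
Proof.
move=> Hn Hne.
case: (Classical_Prop.classic (exists n k, a n k <> 0)) => [[n1 [k1 Hk1]]|Hz]; last first.
  have az : forall n k, a n k = 0.
    by move=> n k; apply: Classical_Prop.NNPP => H; apply: Hz; exists n, k.
  have gz : forall x k, g x k = 0.
    move=> x k; have := (proj1 (Hne (k + 1)%ZZ)) (fun n j _ => az n j) x; apply; lia.
  exists 0%RR; split.
    split; last by exists 0%N; rewrite labs_zero.
    by move=> n; rewrite labs_zero //; apply: Rle_refl.
  split; first by move=> r [x ->]; rewrite labs_zero //; apply: Rle_refl.
  by move=> b Hb; have := Hb _ (ex_intro _ x0 erefl); rewrite labs_zero.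
case: (val_ex (a n1)) => [H|[v1 Hv1]]; first by exfalso; apply: Hk1; apply: H.
case: (Hn (v1 + 1)%ZZ) => N0 HN0.
case: (@argmax (fun n => labs e (a n)) (maxn N0 n1.+1)) => [|n0 [Hn0 Hmax]].
  by rewrite leq_max ltn0Sn orbT.
have H1 : (labs e (a n1) <= labs e (a n0))%RR by apply: Hmax; rewrite leq_max ltnSn orbT.
have Hall : forall n, (labs e (a n) <= labs e (a n0))%RR.
  move=> n; case: (leqP (maxn N0 n1.+1) n) => Hn'; last exact: Hmax.
  have : vb (a n) (v1 + 1)%ZZ by apply: HN0; apply: leq_trans Hn'; exact: leq_maxl.
  move/(vb_labs He) => H2; apply: Rle_trans H2 _; apply: Rle_trans _ H1.
  rewrite (labs_val e Hv1); apply: Rlt_le; apply: rp_lt; lia.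
case: (val_ex (a n0)) => [Hz0|[v0 Hv0]].
  exfalso; move: H1; rewrite (labs_zero e Hz0) (labs_val e Hv1) => H1.
  by have := rp_pos F e v1; lra.
exists (labs e (a n0)); split; first by split => //; exists n0.
rewrite (labs_val e Hv0) in Hall *.
have Hav : forall n, vb (a n) v0 by move=> n; apply/(vb_labs He).
split.
  by move=> r [x ->]; apply/(vb_labs He); apply: (proj1 (Hne v0)).
move=> b Hb; apply: Rnot_lt_le => Hlt.
have Hg : forall x, vb (g x) (v0 + 1)%ZZ.
  move=> x; apply: (labs_lt_vb He); apply: Rle_lt_trans Hlt.
  by apply: Hb; exists x.
have := (proj2 (Hne (v0 + 1)%ZZ)) Hg n0 v0 ltac:(lia).
by case: Hv0.
Qed.

Lemma ONB_to_v (b : nat -> X -> L) : orthonormal_basis e b -> ONBv b.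
Proof.
move=> [Hc Hg]; split; first by move=> n; apply/T1.
move=> g /T1 /Hg [a [Hn Hs Hm Hu]]; exists a; split.
- exact/T2.
- exact/T3.
- exact: T4.
- by move=> a' /T2 Hn' /T3 Hs'; apply: Hu.
Qed.

Lemma v_to_ONB (x0 : X) (b : nat -> X -> L) : ONBv b -> orthonormal_basis e b.
Proof.
move=> [Hc Hg]; split; first by move=> n; apply/T1.
move=> g /T1 /Hg [a [Hn Hs Hm Hu]]; exists a; split.
- exact/T2.
- exact/T3.
- exact: T5.
- by move=> a' /T2 Hn' /T3 Hs'; apply: Hu.
Qed.

End Transfer.

Section Part1.
Variables (F : finFieldType) (X : topologicalType) (N : nat).
Hypothesis N0 : (0 < N)%N.
Local Notation L := (laurent F).
Local Notation NZ := (Z.of_nat N).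

Lemma NZpos : (0 < NZ)%ZZ. Proof. by apply/Z.ltb_lt; move: N0; lia. Qed.

Lemma divmod k : k = (NZ * (k / NZ) + k mod NZ)%ZZ /\ (0 <= k mod NZ < NZ)%ZZ.
Proof. split; [apply: Z.div_mod; have := NZpos; lia | apply: Z.mod_pos_bound; exact: NZpos]. Qed.

Lemma split_lb (r : nat) (a : L) : lbounded (fun j => a (j * NZ + Z.of_nat r)%ZZ).
Proof.
exists (Z.min (lb a) 0 - Z.of_nat r)%ZZ => j Hj; apply: lbP'.
have := NZpos; nia.
Qed.
Definition lsplit (r : nat) (a : L) : L := Laurent (split_lb r a).

Lemma common_lb (c : nat -> L) n : exists B, forall r, (r < n)%N -> vb (c r) B.
Proof.
elim: n => [|n [B HB]]; first by exists 0%ZZ.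
exists (Z.min B (lb (c n))) => r; rewrite ltnS leq_eqVlt => /orP[/eqP ->|/HB H].
  by apply: vbW (lbP' (a:=c n)); lia.
by apply: vbW H; lia.
Qed.

Lemma merge_lb (c : nat -> L) : lbounded (fun k => c (Z.to_nat (k mod NZ)) (k / NZ)%ZZ).
Proof.
case: (common_lb c N) => B HB.
exists (Z.min B 0 * NZ)%ZZ => k Hk.
have [_ Hm] := divmod k.
apply: HB; first by apply/ltP; lia.
apply: (Z.lt_le_trans _ (Z.min B 0)); last lia.
apply: Z.div_lt_upper_bound; first exact: NZpos.
lia.
Qed.
Definition merge (c : nat -> L) : L := Laurent (merge_lb c).

Lemma merge_split (a : L) : merge (fun r => lsplit r a) = a.
Proof.
apply: leqL => k /=; have [Hd Hm] := divmod k; congr (a _); lia.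
Qed.

Lemma split_merge (c : nat -> L) r : (r < N)%N -> lsplit r (merge c) = c r.
Proof.
move=> Hr; apply: leqL => j /=.
have E1 : ((j * NZ + Z.of_nat r) mod NZ = Z.of_nat r)%ZZ.
  rewrite Z.add_comm Z.mod_add; last by have := NZpos; lia.
  by apply: Z.mod_small; move/ltP: Hr; lia.
have E2 : ((j * NZ + Z.of_nat r) / NZ = j)%ZZ.
  rewrite Z.div_add_l; last by have := NZpos; lia.
  by rewrite Z.div_small; [lia | move/ltP: Hr; lia].
by rewrite E1 E2 Nat2Z.id.
Qed.

Lemma merge_ext (c d : nat -> L) : (forall r, (r < N)%N -> c r = d r) -> merge c = merge d.
Proof.
move=> H; apply: leqL => k /=; have [_ Hm] := divmod k.
by rewrite H //; apply/ltP; lia.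
Qed.

Lemma mergeB (c d : nat -> L) : merge c - merge d = merge (fun r => c r - d r).
Proof. by apply: leqL. Qed.
Lemma mergeD (c d : nat -> L) : merge c + merge d = merge (fun r => c r + d r).
Proof. by apply: leqL. Qed.
Lemma merge0 : merge (fun _ => 0) = 0.
Proof. by apply: leqL. Qed.
Lemma splitB r (a b : L) : lsplit r (a - b) = lsplit r a - lsplit r b.
Proof. by apply: leqL. Qed.

Lemma vb_split r (a : L) K : (r < N)%N -> vb a (K * NZ)%ZZ -> vb (lsplit r a) K.
Proof. move=> /ltP Hr Ha j Hj /=; apply: Ha; nia. Qed.

Lemma vb_merge (c : nat -> L) K : (forall r, (r < N)%N -> vb (c r) K) -> vb (merge c) (K * NZ)%ZZ.
Proof.
move=> H k Hk /=; have [Hd Hm] := divmod k.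
apply: H; first by apply/ltP; lia.
nia.
Qed.

Definition Kr (r : nat) (K : Z) := ((K - Z.of_nat r - 1) / NZ + 1)%ZZ.

Lemma vb_split_iff (a : L) K : vb a K <-> forall r, (r < N)%N -> vb (lsplit r a) (Kr r K).
Proof.
split.
  move=> Ha r Hr j Hj /=; apply: Ha.
  have [Hd Hm] := divmod (K - Z.of_nat r - 1)%ZZ.
  rewrite /Kr in Hj; nia.
move=> H k Hk; have [Hd Hm] := divmod k.
have Hr : (Z.to_nat (k mod NZ) < N)%N by apply/ltP; lia.
have := H _ Hr (k / NZ)%ZZ => /=.
have -> : (k / NZ * NZ + Z.of_nat (Z.to_nat (k mod NZ)))%ZZ = k by lia.
apply; rewrite /Kr.
have [Hd' Hm'] := divmod (K - Z.of_nat (Z.to_nat (k mod NZ)) - 1)%ZZ.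
nia.
Qed.

Definition phi (y : L) : L := lembed N y.

Lemma phiB (a b : L) : phi (a - b) = phi a - phi b.
Proof. by apply: leqL => k /=; case: ifP => //; rewrite subr0. Qed.

Lemma vb_phi (a : L) K : vb a K -> vb (phi a) (K * NZ)%ZZ.
Proof.
move=> Ha k Hk /=; rewrite N0 /=; case: Z.eqb => //; apply: Ha.
apply: Z.div_lt_upper_bound; first exact: NZpos.
lia.
Qed.


Hypothesis Hpow : forall y : L, lembed N y = y ^+ N.

Lemma merge_sum (c : nat -> L) :
  merge c = \sum_(0 <= r < N) mono 1 (Z.of_nat r) * phi (c r).
Proof.
apply: leqL => k; rewrite coef_sum.
under eq_bigr => r _ do rewrite mono_mul mul1r /= N0 /=.
have [Hd Hm] := divmod k.
rewrite (sum_one (j0 := Z.to_nat (k mod NZ))) /=.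
- congr (c _ _).
  have -> : (k - Z.of_nat (Z.to_nat (k mod NZ)) = (k / NZ) * NZ)%ZZ by lia.
  by rewrite Z.div_mul //; have := NZpos; lia.
- by apply/ltP; lia.
- move=> j /ltP Hj /Z.eqb_eq Hj0.
  have [Hd' Hm'] := divmod (k - Z.of_nat j)%ZZ.
  rewrite Hj0 in Hd'.
  have E : (Z.of_nat j - k mod NZ = NZ * (k / NZ - (k - Z.of_nat j) / NZ))%ZZ by lia.
  have : (k / NZ - (k - Z.of_nat j) / NZ = 0)%ZZ by nia.
  lia.
- apply/Z.eqb_eq.
  have -> : (k - Z.of_nat (Z.to_nat (k mod NZ)) = (k / NZ) * NZ)%ZZ by lia.
  by rewrite Z.mod_mul //; have := NZpos; lia.
Qed.

Lemma MM (c : nat -> L) (y : L) : merge c * phi y = merge (fun r => c r * y).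
Proof.
rewrite merge_sum mulr_suml (merge_sum (fun r => c r * y)).
by apply: eq_bigr => r _; rewrite -mulrA /phi !Hpow exprMn.
Qed.

Lemma psumS (a : nat -> L) (b : nat -> X -> L) x M :
  psum a b x M.+1 = psum a b x M + a M * b M x.
Proof. by []. Qed.

Lemma psum_merge (A : nat -> nat -> L) (b : nat -> X -> L) x M :
  psum (fun n => merge (fun r => A r n)) (fun n x => phi (b n x)) x M =
  merge (fun r => psum (A r) b x M).
Proof.
elim: M => [|M IH]; first by apply: leqL.
by rewrite !psumS IH MM mergeD.
Qed.


Lemma common_N (P : nat -> nat -> Prop) n :
  (forall r, (r < n)%N -> exists N0, forall M, (N0 <= M)%N -> P r M) ->
  exists N0, forall r, (r < n)%N -> forall M, (N0 <= M)%N -> P r M.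
Proof.
elim: n => [|n IH] H; first by exists 0%N.
case: IH => [r Hr|N1 H1]; first by apply: H; apply: ltnW.
case: (H n (ltnSn n)) => N2 H2.
exists (maxn N1 N2) => r; rewrite ltnS leq_eqVlt => /orP[/eqP ->|Hr] M HM.
  by apply: H2; apply: leq_trans HM; apply: leq_maxr.
by apply: H1 => //; apply: leq_trans HM; apply: leq_maxl.
Qed.

Lemma absN K : (K <= Z.abs K * NZ)%ZZ.
Proof. have := NZpos; nia. Qed.

Theorem part1v (f : nat -> X -> L) : ONBv f -> ONBv (fun n x => phi (f n x)).
Proof.
move=> [Hc Hg]; split.
  move=> n x K; apply: (filterS _ (Hc n x (Z.abs K))) => y /= Hy.
  rewrite -phiB; apply: vbW (vb_phi Hy); exact: absN.
move=> g Hgc.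
have Hgr : forall r, exists a, (r < N)%N ->
   [/\ nullv a, sumv (fun x => lsplit r (g x)) a f, NE a (fun x => lsplit r (g x)) &
       forall a', nullv a' -> sumv (fun x => lsplit r (g x)) a' f -> a' = a].
  move=> r; case: (ltnP r N) => Hr; last by exists (fun _ => 0).
  have : lcv (fun x => lsplit r (g x)).
    move=> x K; apply: (filterS _ (Hgc x (K * NZ)%ZZ)) => y /= Hy.
    rewrite -splitB; exact: vb_split.
  by move/Hg => [a Ha]; exists a.
case: (choice Hgr) => A HA.
exists (fun n => merge (fun r => A r n)); split.
- move=> K.
  case: (@common_N (fun r n => vb (A r n) (Z.abs K)) N) => [r Hr|N1 HN1].
    by case: (HA r Hr) => Hn _ _ _; apply: Hn.
  exists N1 => n Hn; apply: vbW (vb_merge _); first exact: absN.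
  by move=> r Hr; apply: HN1.
- move=> K.
  case: (@common_N (fun r M => forall x, vb (lsplit r (g x) - psum (A r) f x M) (Z.abs K)) N)
    => [r Hr|N1 HN1].
    by case: (HA r Hr) => _ Hs _ _; apply: Hs.
  exists N1 => M HM x.
  rewrite psum_merge -{1}(merge_split (g x)) mergeB.
  apply: vbW (vb_merge _); first exact: absN.
  by move=> r Hr; apply: HN1.
- move=> K; split.
  + move=> Ha x; apply/vb_split_iff => r Hr.
    case: (HA r Hr) => _ _ Hne _; apply: (proj1 (Hne (Kr r K))) => n.
    by have := proj1 (vb_split_iff _ _) (Ha n) r Hr; rewrite split_merge.
  + move=> Hgx n; apply/vb_split_iff => r Hr; rewrite split_merge //.
    case: (HA r Hr) => _ _ Hne _; apply: (proj2 (Hne (Kr r K))) => x.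
    exact: (proj1 (vb_split_iff _ _) (Hgx x) r Hr).
- move=> a' Hn' Hs'.
  have ea : a' = fun n => merge (fun r => lsplit r (a' n)).
    by apply: functional_extensionality => n; rewrite merge_split.
  have E : forall r, (r < N)%N -> (fun n => lsplit r (a' n)) = A r.
    move=> r Hr; case: (HA r Hr) => _ _ _; apply.
      move=> K; case: (Hn' (K * NZ)%ZZ) => N1 HN1; exists N1 => n Hn.
      by apply: vb_split => //; apply: HN1.
    move=> K; case: (Hs' (K * NZ)%ZZ) => N1 HN1; exists N1 => M HM x.
    have := HN1 M HM x.
    rewrite {1}ea (psum_merge (fun r n => lsplit r (a' n))) -{1}(merge_split (g x)) mergeB.
    by move/(vb_split Hr); rewrite split_merge.
  apply: functional_extensionality => n; rewrite {1}ea /=.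
  by apply: merge_ext => r Hr; rewrite -(E r Hr).
Qed.

End Part1.

Close Scope ring_scope.

Lemma Hpow_of (F : finFieldType) m (y : laurent F) : lembed (#|F| ^ m) y = (y ^+ (#|F| ^ m))%R.
Proof. by rewrite lembed_pow. Qed.

(* K = F((T)) with F = F_q (q = #|F|), absolute value labs 1;
   K_m = F((T^{1/q^m})) with absolute value labs (q^m). *)
Theorem proposition2 (F : finFieldType) (X : topologicalType)
  (cX : compact [set: X]) (hX : hausdorff_space X)
  (tdX : totally_disconnected [set: X])
  (f : nat -> X -> laurent F) :
  orthonormal_basis 1 f ->
  forall m : nat, (0 < m)%N ->
    orthonormal_basis 1 (fun n x => lpow (f n x) (#|F| ^ m)) /\
    orthonormal_basis (#|F| ^ m) (fun n x => lroot m (f n x)).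
Proof.
move=> Hf m Hm.
have N0 : (0 < #|F| ^ m)%N by rewrite expn_gt0; apply/orP; left; apply/card_gt0P; exists 0%R.
have [x0 _] : exists x : X, True.
  apply: Classical_Prop.NNPP => Hno.
  have Hc : lcontinuous 1 (fun _ : X => lzero F).
    apply/(T1 (ltn0Sn 0)) => x K; apply: (filterS _ filterT) => y _ k _ /=.
    by rewrite subr0.
  case: (proj2 Hf _ Hc) => a [_ _ [M [_ [_ Hl]]] _].
  have : (M <= M - 1)%RR.
    by apply: Hl => r [x _]; exfalso; apply: Hno; exists x.
  lra.
have Hv := ONB_to_v (ltn0Sn 0) Hf.
split.
  have -> : (fun n x => lpow (f n x) (#|F| ^ m)) = (fun n x => phi (#|F| ^ m) (f n x)).
    apply: functional_extensionality => n; apply: functional_extensionality => x.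
    by rewrite lpowE /phi lembed_pow.
  apply: (v_to_ONB (ltn0Sn 0) x0).
  exact: (part1v N0 (@Hpow_of F m) Hv).
have -> : (fun n x => lroot m (f n x)) = f.
  apply: functional_extensionality => n; apply: functional_extensionality => x.
  exact: lrootE.
exact: (v_to_ONB N0 x0 Hv).
Qed.
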